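(* Consider the mass-action system in the concentrations $x_1,\dots,x_6$ with positive reaction rate constants $k_1,\dots,k_6$: \[ \begin{aligned} \dot x_1&=-k_1x_1+k_4x_3x_5, & \dot x_2&=k_1x_1-k_2x_2+k_5x_4x_5, & \dot x_3&=k_2x_2-k_3x_3-k_4x_3x_5,\\ \dot x_4&=k_3x_3-k_5x_4x_5, & \dot x_5&=-k_4x_3x_5-k_5x_4x_5+k_6x_6, & \dot x_6&=k_4x_3x_5+k_5x_4x_5-k_6x_6, \end{aligned} \] together with the conservation laws $x_1+x_2+x_3+x_4=T_1$, $x_5+x_6=T_2$, with $T_1,T_2>0$. Assume that a fixed choice of reaction rate constants satisfies $k_3>k_1$. Then $k_6\left(\frac{1}{k_2}+\frac{1}{k_3}\right)<k_6\left(\frac{1}{k_1}+\frac{1}{k_2}\right)$, and for any choice of total concentration constants $T_1,T_2>0$ verifying \[ k_6\left(\frac{1}{k_2}+\frac{1}{k_3}\right)<\frac{T_1}{T_2}<k_6\left(\frac{1}{k_1}+\frac{1}{k_2}\right), \] there exist positive constants $N_1,N_2$ such that for any values $\beta_4,\beta_5>0$ with $\beta_4>N_1$ and $\frac{\beta_5}{\beta_4}>N_2$, after replacing $k_4$ by $\overline{k_4}=\beta_4k_4$ and $k_5$ by $\overline{k_5}=\beta_5k_5$ (keeping $k_1,k_2,k_3,k_6,T_1,T_2$ unchanged), the system has at least three positive steady states, i.e. there are at least three points $x\in\mathbb R^6_{>0}$ with $\dot x_1=\dots=\dot x_6=0$, $x_1+x_2+x_3+x_4=T_1$ and $x_5+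x_6=T_2$.
   Context: This is the mass-action system of the chemical reaction network $X_1\xrightarrow{k_1}X_2\xrightarrow{k_2}X_3\xrightarrow{k_3}X_4$, $X_3+X_5\xrightarrow{k_4}X_1+X_6$, $X_4+X_5\xrightarrow{k_5}X_2+X_6$, $X_6\xrightarrow{k_6}X_5$ (a two-component system with hybrid histidine kinase); $x_i$ is the concentration of species $X_i$. A positive steady state is a point of $\mathbb R^6_{>0}$ where the right-hand sides vanish. *)

(* Defs.v *)
From Stdlib Require Import Reals.
Open Scope R_scope.

Record state := mkState { x1 : R; x2 : R; x3 : R; x4 : R; x5 : R; x6 : R }.

Definition f1 (k1 k2 k3 k4 k5 k6 : R) (x : state) : R :=
  - k1 * x1 x + k4 * x3 x * x5 x.
Definition f2 (k1 k2 k3 k4 k5 k6 : R) (x : state) : R :=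
  k1 * x1 x - k2 * x2 x + k5 * x4 x * x5 x.
Definition f3 (k1 k2 k3 k4 k5 k6 : R) (x : state) : R :=
  k2 * x2 x - k3 * x3 x - k4 * x3 x * x5 x.
Definition f4 (k1 k2 k3 k4 k5 k6 : R) (x : state) : R :=
  k3 * x3 x - k5 * x4 x * x5 x.
Definition f5 (k1 k2 k3 k4 k5 k6 : R) (x : state) : R :=
  - k4 * x3 x * x5 x - k5 * x4 x * x5 x + k6 * x6 x.
Definition f6 (k1 k2 k3 k4 k5 k6 : R) (x : state) : R :=
  k4 * x3 x * x5 x + k5 * x4 x * x5 x - k6 * x6 x.

Definition pos_steady_state (k1 k2 k3 k4 k5 k6 T1 T2 : R) (x : state) : Prop :=
  0 < x1 x /\ 0 < x2 x /\ 0 < x3 x /\ 0 < x4 x /\ 0 < x5 x /\ 0 < x6 x /\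
  f1 k1 k2 k3 k4 k5 k6 x = 0 /\ f2 k1 k2 k3 k4 k5 k6 x = 0 /\
  f3 k1 k2 k3 k4 k5 k6 x = 0 /\ f4 k1 k2 k3 k4 k5 k6 x = 0 /\
  f5 k1 k2 k3 k4 k5 k6 x = 0 /\ f6 k1 k2 k3 k4 k5 k6 x = 0 /\
  x1 x + x2 x + x3 x + x4 x = T1 /\ x5 x + x6 x = T2.

(* Main.v *)
Require Import Defs.
From Stdlib Require Import Reals.
From Stdlib Require Import Lra Psatz.
Open Scope R_scope.

Definition Pf (k1 k2 k3 K4 K5 k6 T1 T2 x : R) : R :=
  k6*(T2-x)*(K4*(/k1+/k2)*x^2 + (k3/k2+1)*x + k3/K5) - T1*(K4*x+k3)*x.

Definition stOf (k1 k2 k3 K4 K5 k6 T2 z : R) : state :=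
  let y3 := k6*(T2-z)/(K4*z+k3) in
  mkState (K4*y3*z/k1) (y3*(K4*z+k3)/k2) y3 (k3*y3/(K5*z)) z (T2-z).

Lemma Pf_cont k1 k2 k3 K4 K5 k6 T1 T2 : continuity (Pf k1 k2 k3 K4 K5 k6 T1 T2).
Proof. unfold Pf. reg. Qed.

Lemma steady k1 k2 k3 K4 K5 k6 T1 T2 z :
  0 < k1 -> 0 < k2 -> 0 < k3 -> 0 < K4 -> 0 < K5 -> 0 < k6 ->
  0 < z -> z < T2 -> Pf k1 k2 k3 K4 K5 k6 T1 T2 z = 0 ->
  pos_steady_state k1 k2 k3 K4 K5 k6 T1 T2 (stOf k1 k2 k3 K4 K5 k6 T2 z).
Proof.
  intros h1 h2 h3 h4 h5 h6 hz hzT hP.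
  unfold pos_steady_state, stOf, f1, f2, f3, f4, f5, f6; simpl.
  assert (hD : 0 < K4*z+k3) by nra.
  assert (hy : 0 < k6*(T2-z)/(K4*z+k3)).
  { apply Rdiv_lt_0_compat; nra. }
  set (y := k6*(T2-z)/(K4*z+k3)) in *.
  assert (hy' : y * (K4*z+k3) = k6*(T2-z)) by (unfold y; field; lra).
  assert (hk : 0 < k3 * y / (K5 * z)) by (apply Rdiv_lt_0_compat; nra).
  repeat split; try (apply Rdiv_lt_0_compat; [|assumption]); try nra; try lra.
  - apply Rmult_lt_0_compat; [apply Rmult_lt_0_compat|]; assumption.
  - field; lra.
  - field; split; lra.
  - field; lra.
  - field; split; lra.
  - rewrite <- hy'. field. lra.
  - rewrite <- hy'. field. lra.
  - apply (Rmult_eq_reg_r (z*(K4*z+k3))); [|nra].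
    unfold Pf in hP.
    transitivity (y*(K4*z+k3)*(K4*(/k1+/k2)*z^2 + (k3/k2+1)*z + k3/K5)).
    + field; lra.
    + rewrite hy'. lra.
Qed.

Lemma three_roots (f : R -> R) (T a b : R) :
  continuity f -> 0 < a -> a < b -> b < T ->
  0 < f 0 -> f a < 0 -> 0 < f b -> f T < 0 ->
  exists z1 z2 z3, 0 < z1 < a /\ a < z2 < b /\ b < z3 < T /\
    f z1 = 0 /\ f z2 = 0 /\ f z3 = 0.
Proof.
  intros hc ha hab hbT h0 hfa hfb hT.
  assert (hc' : continuity (fun x => - f x)) by (intro; apply continuity_pt_opp; apply hc).
  destruct (IVT (fun x => - f x) 0 a hc' ha) as [z1 [[l1 r1] e1]]; try lra.
  destruct (IVT f a b hc hab hfa hfb) as [z2 [[l2 r2] e2]].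
  destruct (IVT (fun x => - f x) b T hc' hbT) as [z3 [[l3 r3] e3]]; try lra.
  exists z1, z2, z3.
  assert (f z1 = 0) by lra. assert (f z3 = 0) by lra.
  repeat split; try assumption.
  all: match goal with |- ?u < ?v => destruct (Rle_lt_or_eq_dec u v) as [?|E]; [lra| |]; try (rewrite E in *; lra); auto end.
  all: subst; lra.
Qed.

Theorem theorem1p1 (k1 k2 k3 k4 k5 k6 : R) :
  0 < k1 -> 0 < k2 -> 0 < k3 -> 0 < k4 -> 0 < k5 -> 0 < k6 ->
  k3 > k1 ->
  k6 * (/ k2 + / k3) < k6 * (/ k1 + / k2) /\
  (forall T1 T2 : R, 0 < T1 -> 0 < T2 ->
     k6 * (/ k2 + / k3) < T1 / T2 < k6 * (/ k1 + / k2) ->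
     exists N1 N2 : R, 0 < N1 /\ 0 < N2 /\
       forall b4 b5 : R, 0 < b4 -> 0 < b5 -> b4 > N1 -> b5 / b4 > N2 ->
         exists x y z : state,
           x <> y /\ x <> z /\ y <> z /\
           pos_steady_state k1 k2 k3 (b4 * k4) (b5 * k5) k6 T1 T2 x /\
           pos_steady_state k1 k2 k3 (b4 * k4) (b5 * k5) k6 T1 T2 y /\
           pos_steady_state k1 k2 k3 (b4 * k4) (b5 * k5) k6 T1 T2 z).
Proof.
  intros h1 h2 h3 h4 h5 h6 h31.
  assert (hi : / k3 < / k1) by (apply Rinv_lt_contravar; nra).
  assert (hi1 : 0 < / k1) by (apply Rinv_0_lt_compat; lra).
  assert (hi2 : 0 < / k2) by (apply Rinv_0_lt_compat; lra).
  assert (hi3 : 0 < / k3) by (apply Rinv_0_lt_compat; lra).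
  split; [nra|].
  intros T1 T2 hT1 hT2 [hl hr].
  assert (eT : T1 / T2 * T2 = T1) by (field; lra).
  set (al := / k1 + / k2) in *. assert (Dal : al = / k1 + / k2) by reflexivity. clearbody al.
  set (c1 := k6*T2*al - T1). assert (Dc1 : c1 = k6*T2*al - T1) by reflexivity. clearbody c1.
  set (c2 := T1 - k6*T2*(/k2 + /k3)). assert (Dc2 : c2 = T1 - k6*T2*(/k2 + /k3)) by reflexivity. clearbody c2.
  assert (hc1 : 0 < c1) by (rewrite ?Dc1; nra).
  assert (hc2 : 0 < c2) by (rewrite ?Dc2; nra).
  set (s := k3*c2/(2*c1)). assert (Ds : s = k3*c2/(2*c1)) by reflexivity. clearbody s.
  assert (hs : c1 * s = k3*c2/2) by (rewrite ?Ds; field; lra).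
  assert (hs0 : 0 < s) by (rewrite ?Ds; apply Rdiv_lt_0_compat; nra).
  set (V := k3*c2*s/2). assert (DV : V = k3*c2*s/2) by reflexivity. clearbody V.
  assert (hV : 0 < V) by (rewrite DV; assert (0 < k3*c2) by nra; assert (0 < k3*c2*s) by nra; lra).
  set (bb := c1/(2*k6*al)). assert (Dbb : bb = c1/(2*k6*al)) by reflexivity. clearbody bb.
  assert (hal : 0 < al) by (rewrite ?Dal; lra).
  assert (hbb0 : 0 < bb) by (rewrite ?Dbb; apply Rdiv_lt_0_compat; nra).
  assert (hbb : k6*bb*al = c1/2) by (rewrite ?Dbb; field; lra).
  assert (hbbT : bb < T2) by (rewrite ?Dc1 in hbb; nra).
  set (M := 2*T1*k3/(bb*c1) + s/bb). assert (DM : M = 2*T1*k3/(bb*c1) + s/bb) by reflexivity. clearbody M.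
  assert (hM1 : 0 < 2*T1*k3/(bb*c1)) by (apply Rdiv_lt_0_compat; nra).
  assert (hM2 : 0 < s/bb) by (apply Rdiv_lt_0_compat; nra).
  exists (M/k4), (k4*k6*T2*k3/(k5*V)).
  split; [apply Rdiv_lt_0_compat; rewrite ?DM; lra|].
  split; [apply Rdiv_lt_0_compat; repeat apply Rmult_lt_0_compat; lra|].
  intros b4 b5 hb4 hb5 hN1 hN2.
  set (K4 := b4*k4). assert (DK4 : K4 = b4*k4) by reflexivity. clearbody K4. set (K5 := b5*k5). assert (DK5 : K5 = b5*k5) by reflexivity. clearbody K5.
  assert (hK4 : 0 < K4) by (rewrite ?DK4; nra).
  assert (hK5 : 0 < K5) by (rewrite ?DK5; nra).
  assert (hK4M : K4 > M).
  { rewrite DK4. apply (Rmult_lt_compat_r k4) in hN1; [|lra].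
    replace (M / k4 * k4) with M in hN1 by (field; lra). lra. }
  assert (hrho : k6*T2*k3*(K4/K5) < V).
  { set (q := b5/b4) in *. assert (Dq : q = b5/b4) by reflexivity. clearbody q.
    assert (eq : K4/K5 = k4/(k5*q)) by (rewrite ?DK4, ?DK5, ?Dq; field; lra).
    assert (0 < k4 * k6 * T2 * k3 / (k5 * V)) by (apply Rdiv_lt_0_compat; repeat apply Rmult_lt_0_compat; lra).
    assert (hq : 0 < q) by lra.
    rewrite eq.
    apply (Rmult_lt_compat_r (k5*V)) in hN2; [|nra].
    replace (k4 * k6 * T2 * k3 / (k5 * V) * (k5 * V)) with (k4*k6*T2*k3) in hN2 by (field; lra).
    apply (Rmult_lt_reg_r (k5*q)); [nra|].
    replace (k6 * T2 * k3 * (k4 / (k5 * q)) * (k5 * q)) with (k4*k6*T2*k3) by (field; lra).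
    replace (V * (k5 * q)) with (q * (k5 * V)) by ring. lra. }
  set (a := s/K4). assert (Da : a = s/K4) by reflexivity. clearbody a.
  assert (ha0 : 0 < a) by (rewrite ?Da; apply Rdiv_lt_0_compat; lra).
  assert (hab : a < bb).
  { rewrite Da. apply (Rmult_lt_reg_r K4); [lra|].
    replace (s/K4*K4) with s by (field; lra).
    assert (s/bb < K4) by (rewrite ?DM in hK4M; lra).
    apply (Rmult_lt_compat_r bb) in H; [|lra].
    replace (s/bb*bb) with s in H by (field; lra). lra. }
  set (P := Pf k1 k2 k3 K4 K5 k6 T1 T2). assert (DP : P = Pf k1 k2 k3 K4 K5 k6 T1 T2) by reflexivity. clearbody P.
  assert (hP0 : 0 < P 0).
  { rewrite ?DP; unfold Pf. replace (k6 * (T2 - 0) * (K4 * (/ k1 + / k2) * 0 ^ 2 + (k3 / k2 + 1) * 0 + k3 / K5) -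
     T1 * (K4 * 0 + k3) * 0) with (k6*T2*(k3/K5)) by ring.
    assert (0 < k3/K5) by (apply Rdiv_lt_0_compat; lra). nra. }
  assert (hPT : P T2 < 0).
  { rewrite ?DP; unfold Pf.
    match goal with |- ?L < 0 => replace L with (-(T1*(K4*T2+k3)*T2)) by ring end.
    assert (0 < K4*T2+k3) by nra. assert (0 < T1*(K4*T2+k3)) by nra. nra. }
  assert (hPa : P a < 0).
  { assert (e : P a * K4 = c1*s^2 - k3*c2*s + k6*T2*k3*(K4/K5)
        - (k6*s/K4)*(al*s^2 + (k3/k2+1)*s + k3*(K4/K5))).
    { rewrite ?DP, ?Da, ?Dc1, ?Dc2, ?Dal; unfold Pf. field. lra. }
    assert (e2 : c1*s^2 - k3*c2*s = - V) by (rewrite ?DV; nra).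
    assert (0 < (k6*s/K4)*(al*s^2 + (k3/k2+1)*s + k3*(K4/K5))).
    { apply Rmult_lt_0_compat. apply Rdiv_lt_0_compat; nra.
      assert (0 < k3/k2) by (apply Rdiv_lt_0_compat; lra).
      assert (0 < K4/K5) by (apply Rdiv_lt_0_compat; lra). nra. }
    apply (Rmult_lt_reg_r K4); [lra|]. lra. }
  assert (hPb : 0 < P bb).
  { assert (e : P bb = K4*bb^2*(k6*(T2-bb)*al - T1) + bb*(k6*(T2-bb)*(k3/k2+1) - T1*k3)
        + k6*(T2-bb)*(k3/K5)).
    { rewrite ?DP, ?Dal; unfold Pf. ring. }
    assert (e2 : k6*(T2-bb)*al - T1 = c1/2) by (rewrite ?Dc1; nra).
    assert (0 < k3/K5) by (apply Rdiv_lt_0_compat; lra).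
    assert (0 < k3/k2) by (apply Rdiv_lt_0_compat; lra).
    assert (hK : 2*T1*k3/(bb*c1) < K4) by (rewrite ?DM in hK4M; lra).
    apply (Rmult_lt_compat_r (bb*c1)) in hK; [|nra].
    replace (2*T1*k3/(bb*c1)*(bb*c1)) with (2*T1*k3) in hK by (field; lra).
    rewrite e, e2.
    assert (0 < bb*(K4*bb*c1/2 - T1*k3)) by (apply Rmult_lt_0_compat; lra).
    assert (0 <= k6*(T2-bb)) by nra.
    assert (0 <= bb*(k6*(T2-bb)*(k3/k2+1))) by (apply Rmult_le_pos; [lra|apply Rmult_le_pos; lra]).
    assert (0 <= k6*(T2-bb)*(k3/K5)) by (apply Rmult_le_pos; lra).
    nra. }
  destruct (three_roots P T2 a bb (ltac:(rewrite DP; apply Pf_cont)) ha0 hab hbbT hP0 hPa hPb hPT)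
    as [z1 [z2 [z3 [r1 [r2 [r3 [e1 [e2 e3]]]]]]]].
  subst P K4 K5.
  exists (stOf k1 k2 k3 (b4*k4) (b5*k5) k6 T2 z1), (stOf k1 k2 k3 (b4*k4) (b5*k5) k6 T2 z2), (stOf k1 k2 k3 (b4*k4) (b5*k5) k6 T2 z3).
  split; [|split; [|split; [|split; [|split]]]].
  - intro E. apply (f_equal x5) in E. simpl in E. lra.
  - intro E. apply (f_equal x5) in E. simpl in E. lra.
  - intro E. apply (f_equal x5) in E. simpl in E. lra.
  - apply steady; try assumption; try nra; lra.
  - apply steady; try assumption; try nra; lra.
  - apply steady; try assumption; try nra; lra.
Qed.
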